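(* Let $A=\{a_1^{k_1},\ldots,a_n^{k_n}\}$, $m\ge0$, $r=\max(k_1,\ldots,k_n)$, $s=\min(m,r)$, and let $\Lambda_m(A)$ be the set of tuples $(\lambda_1,\ldots,\lambda_s)$ of non-negative integers with $\sum_{i=1}^s i\lambda_i=m$ and $\sum_{i=j}^s\lambda_i\le\overline{k_j}$ for $j=1,\ldots,s$. Then the number of $m$-permutations of $A$ is $$|P_m(A)|=\sum_{\lambda\in\Lambda_m(A)}\frac{m!}{(1!)^{\lambda_1}(2!)^{\lambda_2}\cdots(s!)^{\lambda_s}}\prod_{j=1}^s\binom{\overline{k_j}-\sum_{i=j+1}^s\lambda_i}{\lambda_j}.$$
   Context: A multiset $A=\{a_1^{k_1},\ldots,a_n^{k_n}\}$ consists of distinct elements $a_1,\ldots,a_n$ with positive integer multiplicities $k_1,\ldots,k_n$. $P_m(A)$, the set of $m$-permutations of $A$, is the set of all sequences (words) of length $m$ over $\{a_1,\ldots,a_n\}$ in which each $a_i$ occurs at most $k_i$ times. For each integer $j\ge1$, $\overline{k_j}=|\{i\in\{1,\ldots,n\}: k_i\ge j\}|$. *)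

(* Defs.v *)
From mathcomp Require Import all_boot all_order all_algebra.
Set Implicit Arguments. Unset Strict Implicit. Unset Printing Implicit Defensive.

(* A multiset A = {a_1^{k_1},...,a_n^{k_n}} is modelled by its elements 'I_n
   (a_i is represented by i) and the multiplicity function k : 'I_n -> nat. *)

Definition mperms (n : nat) (k : 'I_n -> nat) (m : nat) : {set m.-tuple 'I_n} :=
  [set w : m.-tuple 'I_n | [forall i : 'I_n, count_mem i w <= k i]].

Definition kbar (n : nat) (k : 'I_n -> nat) (j : nat) : nat :=
  #|[set i : 'I_n | j <= k i]|.

Definition kmax (n : nat) (k : 'I_n -> nat) : nat := \max_(i : 'I_n) k i.

(* A tuple (lambda_1,...,lambda_s) is represented by l : {ffun 'I_s -> 'I_(m.+1)}
   (entries automatically bounded by m, which any element of Lambda_m(A)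
   satisfies since sum_i i*lambda_i = m); lam l i = lambda_i for 1 <= i <= s,
   and 0 otherwise. *)
Definition lam (s m : nat) (l : {ffun 'I_s -> 'I_m.+1}) (i : nat) : nat :=
  if 0 < i then
    (if @insub _ (fun x => x < s) _ i.-1 is Some j then val (l j) else 0)
  else 0.

Definition inLambda (n : nat) (k : 'I_n -> nat) (m s : nat)
    (l : {ffun 'I_s -> 'I_m.+1}) : bool :=
  (\sum_(1 <= i < s.+1) i * lam l i == m) &&
  [forall j : 'I_s, \sum_(j.+1 <= i < s.+1) lam l i <= kbar k j.+1].

(* Main.v *)
Require Import Defs.
From mathcomp Require Import all_boot all_order all_algebra.
From mathcomp Require Import zify.
Import GRing.Theory Num.Theory.
Set Implicit Arguments. Unset Strict Implicit. Unset Printing Implicit Defensive.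

Section Multi.
Variable n : nat.

Lemma card_cons m (P : pred (m.+1.-tuple 'I_n)) :
  #|[set w | P w]| = \sum_(x : 'I_n) #|[set t : m.-tuple 'I_n | P [tuple of x :: t]]|.
Proof.
rewrite -sum1_card.
rewrite (reindex (fun p : 'I_n * m.-tuple 'I_n => [tuple of p.1 :: p.2])); last first.
  exists (fun w => (thead w, [tuple of behead w])) => [[x t]|w] _ /=.
    by congr pair; apply: val_inj.
  by rewrite [RHS](tuple_eta w); apply: val_inj.
symmetry.
rewrite (eq_bigr (fun x => \sum_(t : m.-tuple 'I_n | P [tuple of x :: t]) 1)); last first.
  by move=> x _; rewrite -sum1_card; apply: eq_bigl => t; rewrite inE.
rewrite (pair_big_dep xpredT (fun (x : 'I_n) (t : m.-tuple 'I_n) => P [tuple of x :: t])) /=.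
by apply: eq_bigl => p; rewrite inE.
Qed.

Definition Nw m (c : 'I_n -> nat) :=
  #|[set w : m.-tuple 'I_n | [forall i, count_mem i w == c i]]|.

Lemma Nw_mult m (c : 'I_n -> nat) : \sum_i c i = m ->
  Nw m c * \prod_i (c i)`! = m`!.
Proof.
elim: m c => [|m IH] c hc.
  have c0 : forall i, c i = 0.
    by move=> i; apply/eqP; move: hc => /eqP; rewrite sum_nat_eq0 => /forallP /(_ i) /implyP; apply.
  rewrite big1 ?muln1; last by move=> i _; rewrite c0.
  rewrite /Nw (_ : [set w : 0.-tuple 'I_n | _] = setT) ?cardsT ?card_tuple //.
  by apply/setP => w; rewrite !inE tuple0; apply/forallP => i; rewrite c0.
rewrite /Nw card_cons big_distrl /= factS.
have -> : (m.+1 * m`! = \sum_i c i * m`!)%N by rewrite -big_distrl /= hc.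
apply: eq_bigr => x _.
have [cx0|cxp] := posnP (c x).
  rewrite cx0 mul0n (_ : [set _ | _] = set0) ?cards0 ?mul0n //.
  apply/setP => t; rewrite !inE; apply/negbTE/negP => /forallP /(_ x) /eqP.
  by rewrite /= eqxx cx0.
pose c' i := c i - (x == i).
have -> : [set t : m.-tuple 'I_n | [forall i, count_mem i [tuple of x :: t] == c i]]
   = [set w : m.-tuple 'I_n | [forall i, count_mem i w == c' i]].
  apply/setP => t; rewrite !inE; apply: eq_forallb => i /=.
  rewrite /c' /=; case: (x =P i) => [<-|_] /=; apply/idP/idP => /eqP h; apply/eqP; lia.
have hc' : \sum_i c' i = m.
  rewrite (bigD1 x) //= in hc; rewrite (bigD1 x) //= /c' eqxx.
  rewrite (eq_bigr (fun i => c i)) => [|i /negPf h]; last by rewrite eq_sym h subn0.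
  lia.
rewrite -(IH c' hc') /Nw.
rewrite (bigD1 x) //= [in RHS](bigD1 x) //= /c' eqxx.
have -> : \prod_(i < n | i != x) (c i - (x == i))`! = \prod_(i < n | i != x) (c i)`!.
  by apply: eq_bigr => i /negPf h; rewrite eq_sym h subn0.
have cxS : (c x)`! = c x * (c x - 1)`!.
  by case: (c x) cxp => // y _; rewrite factS subn1.
by rewrite cxS -!mulnA mulnCA.
Qed.
End Multi.

Section Levels.
Variables (n : nat) (k : 'I_n -> nat) (M : nat) (L : nat -> nat).

Definition lev (c : {ffun 'I_n -> 'I_M.+1}) (j : nat) : {set 'I_n} :=
  [set i | c i == j :> nat].

Definition Qset (t : nat) (U : {set 'I_n}) : {set {ffun 'I_n -> 'I_M.+1}} :=
  [set c : {ffun 'I_n -> 'I_M.+1} | [&& [forall i, (i \in U) ==> (c i == 0 :> nat)],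
              [forall i, c i <= t], [forall i, c i <= k i] &
              [forall j : 'I_t, #|lev c j.+1| == L j.+1]]].

Lemma Qset0 U : Qset 0 U = [set [ffun=> ord0]].
Proof.
apply/setP => c; rewrite !inE; apply/idP/idP.
  case/and4P=> _ /forallP c0 _ _; apply/eqP/ffunP => i; rewrite ffunE.
  by apply: val_inj => /=; move: (c0 i); rewrite leqn0 => /eqP.
move/eqP->; apply/and4P; split; apply/forallP => i; rewrite ?ffunE ?implybT //.
by case: i.
Qed.

Lemma QsetP t (U : {set 'I_n}) (c : {ffun 'I_n -> 'I_M.+1}) : reflect
  [/\ forall i, i \in U -> c i = 0 :> nat, forall i, c i <= t, forall i, c i <= k i &
     forall j, j < t -> #|lev c j.+1| = L j.+1] (c \in Qset t U).
Proof.
rewrite inE; apply: (iffP and4P) => [[/forallP a /forallP b /forallP d /forallP e]|[a b d e]].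
  split=> //.
    by move=> i iU; apply/eqP; exact: (implyP (a i) iU).
  by move=> j jt; apply/eqP; exact: (e (Ordinal jt)).
split; apply/forallP.
- by move=> i; apply/implyP => /a ->.
- by [].
- by [].
- by move=> j; rewrite e.
Qed.

Lemma card_Qset t (U : {set 'I_n}) : t <= M -> U \subset [set i | t < k i] ->
  #|Qset t U| = \prod_(1 <= j < t.+1)
      'C(kbar k j - #|U| - \sum_(j.+1 <= i < t.+1) L i, L j).
Proof.
elim: t U => [|t IH] U tM sU.
  by rewrite Qset0 cards1 big_geq.
pose X := [set i | t < k i] :\: U.
have step : #|Qset t.+1 U| =
   \sum_(S : {set 'I_n} | (S \subset X) && (#|S| == L t.+1)) #|Qset t (U :|: S)|.
  rewrite -sum1_card (partition_big (fun c => lev c t.+1)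
     (fun S => (S \subset X) && (#|S| == L t.+1))); last first.
    move=> c /QsetP[cU cle ck cL]; apply/andP; split; last by rewrite cL.
    apply/subsetP => i; rewrite !inE => /eqP ci; rewrite -ci ck andbT.
    by apply/negP => /cU; rewrite ci.
  apply: eq_bigr => S /andP[sSX /eqP cS].
  pose phi (c : {ffun 'I_n -> 'I_M.+1}) := [ffun i => if i \in S then ord0 else c i].
  pose psi (c : {ffun 'I_n -> 'I_M.+1}) :=
    [ffun i => if i \in S then (inord t.+1 : 'I_M.+1) else c i].
  have -> : \sum_(c | (c \in Qset t.+1 U) && (lev c t.+1 == S)) 1 =
      #|[set c | (c \in Qset t.+1 U) && (lev c t.+1 == S)]|.
    by rewrite -sum1_card; apply: eq_bigl => c; rewrite inE.
  have levS : forall c, lev c t.+1 = S -> forall i, i \in S -> c i = t.+1 :> nat.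
    by move=> c <- i; rewrite inE => /eqP.
  have SX : forall i, i \in S -> (i \notin U) && (t < k i).
    by move=> i iS; move/subsetP: sSX => /(_ i iS); rewrite !inE.
  rewrite -(card_in_imset (f := phi)); last first.
    move=> c1 c2; rewrite !inE => /andP[_ /eqP e1] /andP[_ /eqP e2] /ffunP h.
    apply/ffunP => i; move: (h i); rewrite !ffunE; case: ifP => iS // _.
    by apply: ord_inj; rewrite (levS _ e1) // (levS _ e2).
  apply: eq_card => c'; apply/imsetP/idP.
    case=> c; rewrite inE => /andP[/QsetP[cU cle ck cL] /eqP cS'] ->.
    have cne : forall i, i \notin S -> c i != t.+1 :> nat.
      by move=> i; rewrite -cS' inE.
    apply/QsetP; split.
    - move=> i; rewrite inE ffunE => /orP[iU|->] //.
      by case: ifP => // _; exact: cU.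
    - move=> i; rewrite ffunE; case: ifP => // /negbT /cne ne; by rewrite -ltnS ltn_neqAle ne cle.
    - by move=> i; rewrite ffunE; case: ifP => // _; exact: ck.
    - move=> j jt; rewrite -(cL j (ltnW jt)); apply: eq_card => i.
      rewrite !inE ffunE; case: ifP => // iS.
      by rewrite (levS _ cS') //= eqSS (gtn_eqF jt).
  move=> /QsetP[cU cle ck cL].
  have c'S : forall i, i \in S -> c' i = 0 :> nat.
    by move=> i iS; apply: cU; rewrite inE iS orbT.
  have psiv : forall i, psi c' i = (if i \in S then t.+1 else c' i) :> nat.
    by move=> i; rewrite ffunE; case: ifP => //; rewrite inordK.
  have levpsi : lev (psi c') t.+1 = S.
    apply/setP => i; rewrite inE psiv; case: ifP => [_|_]; first by rewrite eqxx.
    by rewrite ltn_eqF // ltnS cle.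
  exists (psi c'); last first.
    apply/ffunP => i; rewrite !ffunE; case: ifP => iS; last by rewrite iS.
    by apply: ord_inj; rewrite /= c'S.
  rewrite inE levpsi eqxx andbT; apply/QsetP; split.
  - move=> i iU; rewrite psiv; case: ifP => iS; first by move: (SX i iS); rewrite iU.
    by apply: cU; rewrite inE iU.
  - by move=> i; rewrite psiv; case: ifP => // _; exact: leqW.
  - move=> i; rewrite psiv; case: ifP => [iS|_] //.
    by case/andP: (SX i iS).
  - move=> j; rewrite ltnS leq_eqVlt => /orP[/eqP ->|jt]; first by rewrite levpsi cS.
    rewrite -(cL j jt); apply: eq_card => i.
    rewrite !inE psiv; case: ifP => // iS.
    by rewrite c'S // eqSS (gtn_eqF jt).
have cU : forall S : {set 'I_n}, S \subset X -> #|U :|: S| = #|U| + #|S|.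
  move=> S sSX; rewrite cardsU (_ : U :&: S = set0) ?cards0 ?subn0 //.
  apply/setP => i; rewrite !inE; apply/negbTE/negP => /andP[iU iS].
  by move/subsetP: sSX => /(_ i iS); rewrite !inE iU.
rewrite step.
have -> : \sum_(S : {set 'I_n} | (S \subset X) && (#|S| == L t.+1)) #|Qset t (U :|: S)| =
  \sum_(S : {set 'I_n} | (S \subset X) && (#|S| == L t.+1)) \prod_(1 <= j < t.+1)
      'C(kbar k j - (#|U| + L t.+1) - \sum_(j.+1 <= i < t.+1) L i, L j).
  apply: eq_bigr => S /andP[sSX /eqP cS]; rewrite IH ?cU ?cS //; first lia.
  apply/subsetP => i; rewrite !inE => /orP[iU|iS].
    by move/subsetP: sU => /(_ i iU); rewrite inE => /ltnW.
  by move/subsetP: sSX => /(_ i iS); rewrite !inE => /andP[].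
rewrite sum_nat_const.
have -> : #|[pred S : {set 'I_n} | (S \subset X) && (#|S| == L t.+1)]| = 'C(#|X|, L t.+1).
  rewrite -cards_draws; apply: eq_card => S; by rewrite !inE.
have cX : #|X| = kbar k t.+1 - #|U|.
  have sU' : U \subset [set i | t < k i].
    by apply/subsetP => i /(subsetP sU); rewrite !inE => /ltnW.
  by rewrite /X cardsD (setIidPr sU').
rewrite [RHS]big_nat_recr //= (big_geq (leqnn t.+2)) subn0 cX mulnC; congr (_ * _).
apply: eq_big_nat => j /andP[j1 jt].
rewrite [in RHS]big_nat_recr //=; first by congr binomial; lia.
Qed.
End Levels.

Lemma sum_count_mem n (w : seq 'I_n) : \sum_i count_mem i w = size w.
Proof.
elim: w => [|x w IH] /=; first by rewrite big1.
rewrite big_split /= IH (bigD1 x) //= eqxx big1 ?addn0 ?add1n // => i /negPf.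
by rewrite eq_sym => ->.
Qed.

Lemma card_mperms n (k : 'I_n -> nat) m :
  #|mperms k m| = \sum_(c : {ffun 'I_n -> 'I_m.+1} |
      [forall i, c i <= k i] && (\sum_i c i == m)) Nw m (fun i => c i : nat).
Proof.
have cb : forall (w : m.-tuple 'I_n) i, count_mem i w < m.+1.
  by move=> w i; rewrite ltnS -{2}(size_tuple w) count_size.
rewrite -sum1_card (partition_big
   (fun w : m.-tuple 'I_n => [ffun i => inord (count_mem i w)] : {ffun 'I_n -> 'I_m.+1})
   (fun c : {ffun 'I_n -> 'I_m.+1} => [forall i, c i <= k i] && (\sum_i c i == m))).
  apply: eq_bigr => c /andP[/forallP ck /eqP hc].
  rewrite /Nw -sum1_card; apply: eq_bigl => w; rewrite !inE.
  apply/idP/idP.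
    case/andP => _ /eqP <-; apply/forallP => i; by rewrite ffunE inordK.
  move/forallP => h.
  have e : [ffun i => inord (count_mem i w)] = c :> {ffun 'I_n -> 'I_m.+1}.
    by apply/ffunP => i; rewrite ffunE; apply: ord_inj; rewrite inordK // (eqP (h i)).
  by rewrite e eqxx andbT; apply/forallP => i; rewrite (eqP (h i)) ck.
move=> w; rewrite inE => /forallP hw; apply/andP; split.
  by apply/forallP => i; rewrite ffunE inordK.
rewrite (eq_bigr (fun i => count_mem i w)) => [|i _]; last by rewrite ffunE inordK.
by rewrite sum_count_mem size_tuple.
Qed.

Section Main.
Variables (n : nat) (k : 'I_n -> nat) (m s : nat).
Hypotheses (hsm : s <= m) (hsk : forall i, minn m (k i) <= s).
Implicit Type c : {ffun 'I_n -> 'I_m.+1}.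
Implicit Type l : {ffun 'I_s -> 'I_m.+1}.

Lemma c_le_s c i : c i <= k i -> c i <= s.
Proof. move=> h; apply: leq_trans (hsk i); by rewrite leq_min h andbT -ltnS ltn_ord. Qed.

Lemma lamE l (j : 'I_s) : lam l j.+1 = l j.
Proof.
rewrite /lam /=; case: insubP => [u _ /val_inj -> //|]; by rewrite ltn_ord.
Qed.

Definition agree l c := forall v, 0 < v <= s -> lam l v = #|lev c v|.

Lemma sum_lev c (F : nat -> nat) : (forall i, c i <= s) ->
  \sum_i F (c i) = \sum_(0 <= v < s.+1) #|lev c v| * F v.
Proof.
move=> cs.
rewrite (partition_big (fun i => inord (c i) : 'I_s.+1) xpredT) //=.
rewrite big_mkord; apply: eq_bigr => v _.
rewrite (eq_bigr (fun _ => F v)) => [|i /eqP <-]; last by rewrite inordK // ltnS cs.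
rewrite sum_nat_const; congr (_ * _); apply: eq_card => i; rewrite !inE.
by rewrite unfold_in /= inordK // ltnS cs.
Qed.

Lemma prod_lev c (F : nat -> nat) : (forall i, c i <= s) ->
  \prod_i F (c i) = \prod_(0 <= v < s.+1) F v ^ #|lev c v|.
Proof.
move=> cs.
rewrite (partition_big (fun i => inord (c i) : 'I_s.+1) xpredT) //=.
rewrite big_mkord; apply: eq_bigr => v _.
rewrite (eq_bigr (fun _ => F v)) => [|i /eqP <-]; last by rewrite inordK // ltnS cs.
rewrite prod_nat_const; congr (_ ^ _); apply: eq_card => i; rewrite !inE.
by rewrite unfold_in /= inordK // ltnS cs.
Qed.

Lemma agree_sum l c : (forall i, c i <= s) -> agree l c ->
  \sum_(1 <= j < s.+1) j * lam l j = \sum_i c i.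
Proof.
move=> cs ag; rewrite (sum_lev (fun v => v) cs) [RHS]big_ltn //= muln0 add0n.
by apply: eq_big_nat => v /andP[v1 vs]; rewrite ag ?v1 // mulnC.
Qed.

Lemma agree_prod l c : (forall i, c i <= s) -> agree l c ->
  \prod_(1 <= j < s.+1) (j`! ^ lam l j) = \prod_i (c i)`!.
Proof.
move=> cs ag; rewrite (prod_lev factorial cs) [RHS]big_ltn //= fact0 exp1n mul1n.
by apply: eq_big_nat => v /andP[v1 vs]; rewrite ag ?v1.
Qed.

Lemma agree_tail l c j : (forall i, c i <= s) -> agree l c -> 0 < j <= s ->
  \sum_(j <= i < s.+1) lam l i = #|[set i | j <= c i]|.
Proof.
move=> cs ag /andP[j0 js].
have -> : #|[set i | j <= c i]| = \sum_i (j <= c i : nat).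
  rewrite -sum1_card big_mkcond /=; apply: eq_bigr => i _; rewrite inE.
  by case: (j <= c i).
rewrite (sum_lev (fun v => (j <= v : nat)) cs) [RHS](big_cat_nat (n:=j)) //=; last by rewrite ltnW.
rewrite [in RHS]big1_seq ?add0n => [|v /andP[_]]; last first.
  by rewrite mem_index_iota => /andP[_ vj]; rewrite leqNgt vj muln0.
apply: eq_big_nat => v /andP[jv vs]; rewrite jv muln1 ag //.
by rewrite (leq_trans j0 jv) -ltnS vs.
Qed.

Definition typ c : {ffun 'I_s -> 'I_m.+1} := [ffun j => inord #|lev c (nat_of_ord j).+1|].
Definition Cset l := Qset k m (lam l) s set0.

Lemma key l c : (inLambda k l && (c \in Cset l)) =
  ([forall i, c i <= k i] && (\sum_i c i == m)) && (l == typ c).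
Proof.
apply/idP/idP.
  case/andP => /andP[/eqP hsum /forallP hkb] /QsetP[_ cs ck cL].
  have ag : agree l c.
    move=> v /andP[v0 vs]; case: v v0 vs => // v _ vs.
    by rewrite -(cL v vs).
  have hc : \sum_i c i = m by rewrite -(agree_sum cs ag).
  rewrite hc eqxx andbT /=; apply/andP; split; first by apply/forallP.
  apply/eqP/ffunP => j; rewrite ffunE; apply: ord_inj.
  have e : #|lev c j.+1| = l j by rewrite -ag ?lamE // ltn_ord.
  by rewrite e inord_val.
case/andP => /andP[/forallP ck /eqP hc] /eqP ->.
have cs : forall i, c i <= s by move=> i; apply: c_le_s.
have bnd : forall v, 0 < v -> #|lev c v| <= m.
  move=> v v0; apply: (@leq_trans (\sum_i c i)); last by rewrite hc.
  rewrite (bigID (fun i => i \in lev c v)) /= -sum1_card.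
  apply: leq_trans (leq_addr _ _); apply: leq_sum => i; rewrite inE => /eqP ->.
  exact: v0.
have ag : agree (typ c) c.
  move=> v /andP[v0 vs]; case: v v0 vs => // v _ vs.
  by rewrite (lamE (typ c) (Ordinal vs)) ffunE inordK // ltnS bnd.
apply/andP; split; last first.
  apply/QsetP; split => //; first by move=> i; rewrite inE.
  by move=> j js; rewrite ag // js.
apply/andP; split; first by rewrite (agree_sum cs ag) hc.
apply/forallP => j; rewrite (agree_tail cs ag) ?ltn_ord // /kbar.
apply: subset_leq_card; apply/subsetP => i; rewrite !inE => h.
exact: leq_trans h (ck i).
Qed.

Lemma typ_agree c : [forall i, c i <= k i] -> \sum_i c i = m -> agree (typ c) c.
Proof.
move=> /forallP ck hc.
have cs : forall i, c i <= s by move=> i; apply: c_le_s.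
have bnd : forall v, 0 < v -> #|lev c v| <= m.
  move=> v v0; apply: (@leq_trans (\sum_i c i)); last by rewrite hc.
  rewrite (bigID (fun i => i \in lev c v)) /= -sum1_card.
  apply: leq_trans (leq_addr _ _); apply: leq_sum => i; rewrite inE => /eqP ->.
  exact: v0.
move=> v /andP[v0 vs]; case: v v0 vs => // v _ vs.
by rewrite (lamE (typ c) (Ordinal vs)) ffunE inordK // ltnS bnd.
Qed.

End Main.

Unset Implicit Arguments.
Local Open Scope ring_scope.

Theorem theorem7p1 (n : nat) (k : 'I_n -> nat) (hk : forall i, (0 < k i)%N)
    (m : nat) :
  let s := minn m (kmax k) in
  (#|mperms k m|)%:R =
  \sum_(l : {ffun 'I_s -> 'I_m.+1} | inLambda k l)
     ((m`!)%:R / (\prod_(1 <= i < s.+1) ((i`!) ^ lam l i)%N%:R) : rat)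
     * \prod_(1 <= j < s.+1)
         ('C(kbar k j - \sum_(j.+1 <= i < s.+1) lam l i, lam l j))%:R.
Proof.
move=> s.
have hsm : (s <= m)%N by rewrite geq_minl.
have hsk : forall i, (minn m (k i) <= s)%N.
  move=> i; rewrite leq_min geq_minl /=; apply: leq_trans (geq_minr _ _) _.
  exact: (leq_bigmax i).
rewrite card_mperms natr_sum big_mkcond /=.
symmetry.
rewrite (eq_bigr (fun l => \sum_(c | c \in Cset k l)
   ((m`!)%:R / (\prod_(1 <= i < s.+1) ((i`!) ^ lam l i)%N%:R) : rat))); last first.
  move=> l _; rewrite -[X in _ * X]natr_prod.
  have -> : (\prod_(1 <= j < s.+1) 'C(kbar k j - \sum_(j.+1 <= i < s.+1) lam l i, lam l j))%N
        = #|Cset k l|.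
    rewrite /Cset card_Qset // ?sub0set //; apply: eq_bigr => j _; by rewrite cards0 subn0.
  by rewrite -sum1_card natr_sum mulr_sumr; apply: eq_bigr => c _; rewrite mulr1.
rewrite (exchange_big_dep xpredT) //=; apply: eq_bigr => c _.
rewrite (eq_bigl (fun l => (([forall i, c i <= k i] && (\sum_i c i == m)) && (l == typ s c))%N));
  last by move=> l; rewrite key.
case: ifP => Qc; last by rewrite big_pred0 // => l; rewrite ?Qc.
rewrite (eq_bigl (fun l => l == typ s c)) ?big_pred1_eq; last by move=> l; rewrite ?Qc.
case/andP: Qc => ck /eqP hc.
rewrite -natr_prod (agree_prod _ (typ_agree hsk ck hc)); last first.
  by move=> i; apply: (c_le_s hsk); move/forallP: ck.
have e := @Nw_mult n m (fun i => c i : nat) hc; move: e => /= e.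
rewrite -e natrM mulfK // pnatr_eq0 -lt0n; apply: prodn_gt0 => i; exact: fact_gt0.
Qed.
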